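(* Let $E_1,\dots,E_m\in\mathcal L_\Box$ and let $a_1,\dots,a_m$ be pairwise distinct atoms such that every occurrence of each $a_i$ in each $E_j$ lies within the scope of some $\Box$. Then there is a map $\tau$ from atoms to formulas, extended to all formulas by fixing $\bot$ and commuting with $\wedge,\vee,\to,\Box$, such that: (1) $\mathsf{iGL}\vdash\tau(E_i)\leftrightarrow\tau(a_i)$ for every $1\le i\le m$; (2) $\tau(a)=a$ for every atom $a\notin\{a_1,\dots,a_m\}$; (3) for each $i$, every atom occurring in $\tau(a_i)$ occurs in some $E_j$ and is distinct from all of $a_1,\dots,a_m$.
   Context: The modal language $\mathcal L_\Box$ is built from countably many propositional variables, countably many propositional parameters (variables and parameters together are called atoms), the constant $\bot$, the binary connectives $\wedge,\vee,\to$ and the unary modality $\Box$. $\mathsf{iGL}$ is the least set of $\mathcal L_\Box$-formulas closed under modus ponens that contains every instance of the axiom schemata of intuitionistic propositional logic $\mathsf{IPC}$, of $\Box(A\to B)\to(\Box A\to\Box B)$, of $\Box A\to\Box\Box A$, of the Löb schema $\Box(\Box A\to A)\to\Box A$, and of $p\to\Box p$ for every parameter $p$, together with $\Box\varphi$ for every such instance $\varphi$. *)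

(* Defs.v *)
From Stdlib Require Import Arith.

Inductive atom : Type :=
| Var : nat -> atom
| Par : nat -> atom.

Inductive form : Type :=
| Atm : atom -> form
| Bot : form
| And : form -> form -> form
| Or  : form -> form -> form
| Imp : form -> form -> form
| Box : form -> form.

Definition Iff (A B : form) : form := And (Imp A B) (Imp B A).

Inductive ipc_axiom : form -> Prop :=
| ax_K  : forall A B, ipc_axiom (Imp A (Imp B A))
| ax_S  : forall A B C,
    ipc_axiom (Imp (Imp A (Imp B C)) (Imp (Imp A B) (Imp A C)))
| ax_and1 : forall A B, ipc_axiom (Imp (And A B) A)
| ax_and2 : forall A B, ipc_axiom (Imp (And A B) B)
| ax_andI : forall A B, ipc_axiom (Imp A (Imp B (And A B)))
| ax_or1 : forall A B, ipc_axiom (Imp A (Or A B))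
| ax_or2 : forall A B, ipc_axiom (Imp B (Or A B))
| ax_orE : forall A B C,
    ipc_axiom (Imp (Imp A C) (Imp (Imp B C) (Imp (Or A B) C)))
| ax_efq : forall A, ipc_axiom (Imp Bot A).

Inductive igl_axiom : form -> Prop :=
| ax_ipc : forall A, ipc_axiom A -> igl_axiom A
| ax_boxK : forall A B, igl_axiom (Imp (Box (Imp A B)) (Imp (Box A) (Box B)))
| ax_box4 : forall A, igl_axiom (Imp (Box A) (Box (Box A)))
| ax_lob : forall A, igl_axiom (Imp (Box (Imp (Box A) A)) (Box A))
| ax_par : forall n, igl_axiom (Imp (Atm (Par n)) (Box (Atm (Par n)))).

Inductive iGL : form -> Prop :=
| igl_ax : forall A, igl_axiom A -> iGL A
| igl_boxax : forall A, igl_axiom A -> iGL (Box A)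
| igl_mp : forall A B, iGL (Imp A B) -> iGL A -> iGL B.

Fixpoint subst (tau : atom -> form) (A : form) : form :=
  match A with
  | Atm a => tau a
  | Bot => Bot
  | And B C => And (subst tau B) (subst tau C)
  | Or B C => Or (subst tau B) (subst tau C)
  | Imp B C => Imp (subst tau B) (subst tau C)
  | Box B => Box (subst tau B)
  end.

Fixpoint occurs (a : atom) (A : form) : Prop :=
  match A with
  | Atm b => b = a
  | Bot => False
  | And B C | Or B C | Imp B C => occurs a B \/ occurs a C
  | Box B => occurs a B
  end.

Fixpoint occurs_unboxed (a : atom) (A : form) : Prop :=
  match A with
  | Atm b => b = a
  | Bot => False
  | And B C | Or B C | Imp B C => occurs_unboxed a B \/ occurs_unboxed a C
  | Box _ => False
  end.

(* Main.v *)
Require Import Defs.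
From Stdlib Require Import Arith Lia List Classical.
Import ListNotations.

Definition atom_eq_dec : forall a b : atom, {a = b} + {a <> b}.
Proof. decide equality; apply Nat.eq_dec. Defined.

Definition upd (p : atom) (X : form) : atom -> form :=
  fun b => if atom_eq_dec b p then X else Atm b.

Lemma upd_eq p X : upd p X p = X.
Proof. unfold upd; destruct (atom_eq_dec p p); congruence. Qed.
Lemma upd_neq p X b : b <> p -> upd p X b = Atm b.
Proof. unfold upd; destruct (atom_eq_dec b p); congruence. Qed.

Lemma subst_comp : forall A s t, subst s (subst t A) = subst (fun b => subst s (t b)) A.
Proof. induction A; simpl; intros; f_equal; auto. Qed.

Lemma subst_ext : forall A s t, (forall b, occurs b A -> s b = t b) -> subst s A = subst t A.
Proof. induction A; simpl; intros; f_equal; auto. Qed.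

Lemma subst_id : forall A, subst Atm A = A.
Proof. induction A; simpl; f_equal; auto. Qed.

Lemma occurs_subst : forall A s b, occurs b (subst s A) -> exists c, occurs c A /\ occurs b (s c).
Proof.
  induction A; simpl; intros s b H; try tauto;
  try (destruct H as [H|H]; [destruct (IHA1 _ _ H) as [c [? ?]] | destruct (IHA2 _ _ H) as [c [? ?]]];
       exists c; tauto).
  - exists a; auto.
  - destruct (IHA _ _ H) as [c [? ?]]; eauto.
Qed.

Lemma unb_subst : forall A s b, occurs_unboxed b (subst s A) -> exists c, occurs_unboxed c A /\ occurs_unboxed b (s c).
Proof.
  induction A; simpl; intros s b H; try tauto;
  try (destruct H as [H|H]; [destruct (IHA1 _ _ H) as [c [? ?]] | destruct (IHA2 _ _ H) as [c [? ?]]];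
       exists c; tauto).
  - exists a; auto.
Qed.

Lemma occ_upd : forall p X c b, occurs b (upd p X c) -> (c = p /\ occurs b X) \/ (c <> p /\ b = c).
Proof. intros; unfold upd in H; destruct (atom_eq_dec c p); simpl in H; auto. Qed.

Lemma unb_upd : forall p X c b, occurs_unboxed b (upd p X c) -> (c = p) \/ (c <> p /\ b = c).
Proof. intros; unfold upd in H; destruct (atom_eq_dec c p); simpl in H; auto. Qed.

Lemma iGL_nec : forall A, iGL A -> iGL (Box A).
Proof.
  induction 1.
  - apply igl_boxax; auto.
  - eapply igl_mp; [apply igl_ax, ax_box4 | apply igl_boxax; auto].
  - eapply igl_mp; [eapply igl_mp; [apply igl_ax, ax_boxK | eauto] | eauto].
Qed.

Definition L A := forall s, iGL (subst s A).

Lemma L_mp A B : L (Imp A B) -> L A -> L B.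
Proof. intros H1 H2 s; eapply igl_mp; [apply (H1 s) | apply H2]. Qed.
Lemma L_nec A : L A -> L (Box A).
Proof. intros H s; simpl; apply iGL_nec, H. Qed.
Lemma L_subst A t : L A -> L (subst t A).
Proof. intros H s; rewrite subst_comp; apply H. Qed.
Lemma L_iGL A : L A -> iGL A.
Proof. intros H; rewrite <- (subst_id A); apply H. Qed.

Ltac Lipc c := intro; simpl; apply igl_ax, ax_ipc; apply c.
Lemma LK A B : L (Imp A (Imp B A)). Proof. Lipc ax_K. Qed.
Lemma LS A B C : L (Imp (Imp A (Imp B C)) (Imp (Imp A B) (Imp A C))). Proof. Lipc ax_S. Qed.
Lemma Land1 A B : L (Imp (And A B) A). Proof. Lipc ax_and1. Qed.
Lemma Land2 A B : L (Imp (And A B) B). Proof. Lipc ax_and2. Qed.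
Lemma LandI A B : L (Imp A (Imp B (And A B))). Proof. Lipc ax_andI. Qed.
Lemma Lor1 A B : L (Imp A (Or A B)). Proof. Lipc ax_or1. Qed.
Lemma Lor2 A B : L (Imp B (Or A B)). Proof. Lipc ax_or2. Qed.
Lemma LorE A B C : L (Imp (Imp A C) (Imp (Imp B C) (Imp (Or A B) C))). Proof. Lipc ax_orE. Qed.
Lemma Lefq A : L (Imp Bot A). Proof. Lipc ax_efq. Qed.
Lemma LboxK A B : L (Imp (Box (Imp A B)) (Imp (Box A) (Box B))).
Proof. intro; simpl; apply igl_ax, ax_boxK. Qed.
Lemma Lbox4 A : L (Imp (Box A) (Box (Box A))).
Proof. intro; simpl; apply igl_ax, ax_box4. Qed.
Lemma Llob A : L (Imp (Box (Imp (Box A) A)) (Box A)).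
Proof. intro; simpl; apply igl_ax, ax_lob. Qed.

Lemma LI A : L (Imp A A).
Proof.
  eapply L_mp; [eapply L_mp; [apply (LS A (Imp A A) A) | apply LK] | apply (LK A A)].
Qed.

Inductive Pf (G : list form) : form -> Prop :=
| Phyp : forall A, In A G -> Pf G A
| Pthm : forall A, L A -> Pf G A
| Pmp : forall A B, Pf G (Imp A B) -> Pf G A -> Pf G B.

Lemma ded G A B : Pf (A :: G) B -> Pf G (Imp A B).
Proof.
  intro H; induction H.
  - destruct H as [<-|H].
    + apply Pthm, LI.
    + eapply Pmp; [apply Pthm, LK | apply Phyp; auto].
  - eapply Pmp; [apply Pthm, LK | apply Pthm; auto].
  - eapply Pmp; [eapply Pmp; [apply Pthm, LS | eauto] | eauto].
Qed.

Lemma Pf_weak G A : Pf G A -> forall G', incl G G' -> Pf G' A.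
Proof.
  induction 1; intros G' Hi.
  - apply Phyp; auto.
  - apply Pthm; auto.
  - eapply Pmp; eauto.
Qed.

Lemma Pf_L A : Pf [] A -> L A.
Proof. intro H; induction H; [destruct H | auto | eapply L_mp; eauto]. Qed.

Lemma Pf0 G A : Pf [] A -> Pf G A.
Proof. intro H; eapply Pf_weak; [exact H | intros x []]. Qed.

Lemma hyp0 G A : Pf (A :: G) A.
Proof. apply Phyp; left; auto. Qed.
Lemma hyp1 G A B : Pf (B :: A :: G) A.
Proof. apply Phyp; right; left; auto. Qed.
Lemma hyp2 G A B C : Pf (C :: B :: A :: G) A.
Proof. apply Phyp; right; right; left; auto. Qed.

Lemma mp2 G X Y Z : L (Imp X (Imp Y Z)) -> Pf G X -> Pf G Y -> Pf G Z.
Proof. intros; eapply Pmp; [eapply Pmp; [apply Pthm; eauto|]|]; eauto. Qed.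
Lemma mp1 G X Y : L (Imp X Y) -> Pf G X -> Pf G Y.
Proof. intros; eapply Pmp; [apply Pthm; eauto|]; eauto. Qed.

Lemma andI G A B : Pf G A -> Pf G B -> Pf G (And A B). Proof. apply mp2, LandI. Qed.
Lemma andE1 G A B : Pf G (And A B) -> Pf G A. Proof. apply mp1, Land1. Qed.
Lemma andE2 G A B : Pf G (And A B) -> Pf G B. Proof. apply mp1, Land2. Qed.
Lemma orI1 G A B : Pf G A -> Pf G (Or A B). Proof. apply mp1, Lor1. Qed.
Lemma orI2 G A B : Pf G B -> Pf G (Or A B). Proof. apply mp1, Lor2. Qed.
Lemma orE G A B C : Pf G (Or A B) -> Pf (A :: G) C -> Pf (B :: G) C -> Pf G C.
Proof.
  intros H1 H2 H3. eapply Pmp; [|exact H1].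
  eapply Pmp; [eapply Pmp; [apply Pthm, LorE | apply ded; eauto] | apply ded; eauto].
Qed.
Lemma boxK G A B : Pf G (Box (Imp A B)) -> Pf G (Box A) -> Pf G (Box B). Proof. apply mp2, LboxK. Qed.
Lemma box4 G A : Pf G (Box A) -> Pf G (Box (Box A)). Proof. apply mp1, Lbox4. Qed.
Lemma lob G A : Pf G (Box (Imp (Box A) A)) -> Pf G (Box A). Proof. apply mp1, Llob. Qed.
Lemma nec G A : Pf [] A -> Pf G (Box A).
Proof. intro H; apply Pthm, L_nec, Pf_L, H. Qed.

Lemma iffI G A B : Pf (A :: G) B -> Pf (B :: G) A -> Pf G (Iff A B).
Proof. intros; apply andI; apply ded; auto. Qed.
Lemma iffE1 G A B : Pf G (Iff A B) -> Pf G A -> Pf G B.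
Proof. intros H; apply Pmp, (andE1 _ _ _ H). Qed.
Lemma iffE2 G A B : Pf G (Iff A B) -> Pf G B -> Pf G A.
Proof. intros H; apply Pmp, (andE2 _ _ _ H). Qed.
Lemma iff_refl G A : Pf G (Iff A A).
Proof. apply iffI; apply hyp0. Qed.
Lemma iff_trans G A B C : Pf G (Iff A B) -> Pf G (Iff B C) -> Pf G (Iff A C).
Proof.
  intros H1 H2; apply iffI.
  - eapply iffE1; [eapply Pf_weak; [exact H2| intros x; simpl; auto]|].
    eapply iffE1; [eapply Pf_weak; [exact H1| intros x; simpl; auto]| apply hyp0].
  - eapply iffE2; [eapply Pf_weak; [exact H1| intros x; simpl; auto]|].
    eapply iffE2; [eapply Pf_weak; [exact H2| intros x; simpl; auto]| apply hyp0].
Qed.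

Lemma box_mp1 G X Y : Pf [] (Imp X Y) -> Pf G (Box X) -> Pf G (Box Y).
Proof. intros H1 H2; eapply boxK; [apply nec, H1 | exact H2]. Qed.
Lemma box_mp2 G X Y Z : Pf [] (Imp X (Imp Y Z)) -> Pf G (Box X) -> Pf G (Box Y) -> Pf G (Box Z).
Proof. intros H1 H2 H3; eapply boxK; [eapply box_mp1; [exact H1 | exact H2] | exact H3]. Qed.

Lemma box_iff G U V : Pf G (Box (Iff U V)) -> Pf G (Iff (Box U) (Box V)).
Proof.
  intro H; apply iffI.
  - eapply boxK; [| apply hyp0]. eapply box_mp1; [| eapply Pf_weak; [exact H | intros x; simpl; auto]].
    apply ded. apply (andE1 _ _ _ (hyp0 _ _)).
  - eapply boxK; [| apply hyp0]. eapply box_mp1; [| eapply Pf_weak; [exact H | intros x; simpl; auto]].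
    apply ded. apply (andE2 _ _ _ (hyp0 _ _)).
Qed.


Ltac W H := eapply Pf_weak; [exact H | intros ?x; simpl; tauto].
Ltac hyp := apply Phyp; simpl; tauto.

Lemma taut_and U1 V1 U2 V2 : Pf [] (Imp (Iff U1 V1) (Imp (Iff U2 V2) (Iff (And U1 U2) (And V1 V2)))).
Proof.
  apply ded, ded, iffI.
  - apply andI; [eapply iffE1 | eapply iffE1]; try hyp.
    + apply (andE1 _ _ U2); hyp.
    + apply (andE2 _ U1); hyp.
  - apply andI; [eapply iffE2 | eapply iffE2]; try hyp.
    + apply (andE1 _ _ V2); hyp.
    + apply (andE2 _ V1); hyp.
Qed.

Lemma taut_or U1 V1 U2 V2 : Pf [] (Imp (Iff U1 V1) (Imp (Iff U2 V2) (Iff (Or U1 U2) (Or V1 V2)))).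
Proof.
  apply ded, ded, iffI.
  - eapply orE; [apply hyp0 | apply orI1 | apply orI2]; (eapply iffE1; [|apply hyp0]); hyp.
  - eapply orE; [apply hyp0 | apply orI1 | apply orI2]; (eapply iffE2; [|apply hyp0]); hyp.
Qed.

Lemma taut_imp U1 V1 U2 V2 : Pf [] (Imp (Iff U1 V1) (Imp (Iff U2 V2) (Iff (Imp U1 U2) (Imp V1 V2)))).
Proof.
  apply ded, ded, iffI; apply ded.
  - eapply iffE1; [hyp|]. eapply Pmp; [hyp|]. eapply iffE2; [hyp| apply hyp0].
  - eapply iffE2; [hyp|]. eapply Pmp; [hyp|]. eapply iffE1; [hyp| apply hyp0].
Qed.

Lemma BR : forall F s s' G, (forall b, Pf G (Box (Iff (s b) (s' b)))) ->
  Pf G (Box (Iff (subst s F) (subst s' F))).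
Proof.
  induction F; simpl; intros s s' G H.
  - apply H.
  - apply nec, iff_refl.
  - eapply box_mp2; [apply taut_and | apply IHF1 | apply IHF2]; auto.
  - eapply box_mp2; [apply taut_or | apply IHF1 | apply IHF2]; auto.
  - eapply box_mp2; [apply taut_imp | apply IHF1 | apply IHF2]; auto.
  - eapply box_mp1; [| apply box4, IHF; auto].
    apply ded, box_iff, hyp0.
Qed.

Lemma Repl : forall F s s', (forall b, Pf [] (Iff (s b) (s' b))) ->
  Pf [] (Iff (subst s F) (subst s' F)).
Proof.
  induction F; simpl; intros s s' H.
  - apply H.
  - apply iff_refl.
  - eapply Pmp; [eapply Pmp; [apply taut_and | apply IHF1] | apply IHF2]; auto.
  - eapply Pmp; [eapply Pmp; [apply taut_or | apply IHF1] | apply IHF2]; auto.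
  - eapply Pmp; [eapply Pmp; [apply taut_imp | apply IHF1] | apply IHF2]; auto.
  - apply box_iff, nec, IHF; auto.
Qed.

Definition Top := Imp Bot Bot.

Lemma fix_box : forall F q,
  Pf [] (Iff (Box (subst (upd q (Box (subst (upd q Top) F))) F)) (Box (subst (upd q Top) F))).
Proof.
  intros F q.
  set (q0 := Box (subst (upd q Top) F)).
  set (r := Box (subst (upd q q0) F)).
  assert (KEY : forall G, Pf G (Box q0) -> Pf G (Iff r q0)).
  { intros G Hq. unfold r, q0 at 2. apply box_iff, BR.
    intro b. unfold upd; destruct (atom_eq_dec b q).
    - eapply box_mp1; [| exact Hq]. apply ded, iffI.
      + apply ded, hyp0.
      + hyp.
    - apply nec, iff_refl. }
  assert (HX : Pf [] (Imp (Box (Imp r q0)) (Imp r q0))).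
  { apply ded, ded. eapply iffE1; [apply KEY | apply hyp0].
    eapply boxK; [apply hyp1 | apply box4, hyp0]. }
  assert (HX2 : Pf [] (Imp r q0)).
  { eapply Pmp; [exact HX|]. apply lob, nec, HX. }
  apply iffI.
  - eapply Pmp; [apply Pf0, HX2 | apply hyp0].
  - eapply iffE2; [apply KEY, box4, hyp0 | apply hyp0].
Qed.


Fixpoint tb (A : form) : nat :=
  match A with
  | Atm _ | Bot => 0
  | Box _ => 1
  | And X Y | Or X Y | Imp X Y => tb X + tb Y
  end.

Definition idx (b : atom) := match b with Var n => n | Par n => n end.

Fixpoint mx (A : form) : nat :=
  match A with
  | Atm b => idx b
  | Bot => 0
  | Box X => mx X
  | And X Y | Or X Y | Imp X Y => max (mx X) (mx Y)
  end.

Lemma mx_occ : forall A b, occurs b A -> idx b <= mx A.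
Proof. induction A; simpl; intros b H; try tauto; try (subst; lia);
  try (destruct H; [specialize (IHA1 _ H) | specialize (IHA2 _ H)]; lia); auto. Qed.

Definition fresh (A : form) (p : atom) := Var (S (max (mx A) (idx p))).

Lemma fresh_nocc A p : ~ occurs (fresh A p) A.
Proof. intro H; apply mx_occ in H; simpl in H; lia. Qed.
Lemma fresh_neq A p : fresh A p <> p.
Proof. intro H; assert (idx (fresh A p) = idx p) by (rewrite H; auto); simpl in *; lia. Qed.

Definition bin_split (q : atom) (mk : form -> form -> form)
  (o1 o2 : option (form * form)) (X Y : form) : option (form * form) :=
  match o1 with
  | Some (B, C) => Some (mk B Y, C)
  | None => match o2 with Some (B, C) => Some (mk X B, C) | None => None end
  end.

Fixpoint splitb (q : atom) (A : form) : option (form * form) :=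
  match A with
  | Atm _ | Bot => None
  | Box C => Some (Atm q, C)
  | And X Y => bin_split q And (splitb q X) (splitb q Y) X Y
  | Or X Y => bin_split q Or (splitb q X) (splitb q Y) X Y
  | Imp X Y => bin_split q Imp (splitb q X) (splitb q Y) X Y
  end.

Lemma subst_upd_nocc A q X : ~ occurs q A -> subst (upd q X) A = A.
Proof.
  intro H. rewrite <- (subst_id A) at 2. apply subst_ext.
  intros b Hb. apply upd_neq. intro; subst; auto.
Qed.

Ltac bsplit IH1 IH2 q A1 A2 H :=
  unfold bin_split in H;
  destruct (splitb q A1) as [[B1 C1]|] eqn:E1;
    [ inversion H; subst; clear H; specialize (IH1 _ _ _ E1)
    | destruct (splitb q A2) as [[B2 C2]|] eqn:E2; inversion H; subst; clear H;
      specialize (IH2 _ _ _ E2) ].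

Lemma split_prop : forall A q B C, splitb q A = Some (B, C) ->
  (~ occurs q A -> subst (upd q (Box C)) B = A) /\
  tb B < tb A /\
  (forall b, occurs b B -> occurs b A \/ b = q) /\
  (forall b, occurs b C -> occurs b A) /\
  (forall b, occurs_unboxed b B -> occurs_unboxed b A \/ b = q).
Proof.
  induction A; simpl; intros q B C H; try discriminate.
  1-3: bsplit IHA1 IHA2 q A1 A2 H; simpl;
    [ destruct IHA1 as [P1 [P2 [P3 [P4 P5]]]] | destruct IHA2 as [P1 [P2 [P3 [P4 P5]]]] ];
    (refine (conj _ (conj _ (conj _ (conj _ _))));
     [ intro Hn; f_equal; try apply subst_upd_nocc; try (apply P1); tauto
     | lia
     | intros b Hb; destruct Hb as [Hb|Hb]; try (destruct (P3 b Hb)); tauto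
     | intros b Hb; specialize (P4 b Hb); tauto
     | intros b Hb; destruct Hb as [Hb|Hb]; try (destruct (P5 b Hb)); tauto ]).
  inversion H; subst; simpl. repeat split.
  - intros; rewrite upd_eq; auto.
  - auto.
  - auto.
  - auto.
  - auto.
Qed.

Lemma split_none : forall A q, splitb q A = None -> forall b, occurs b A -> occurs_unboxed b A.
Proof.
  induction A; simpl; intros q H b Hb; try discriminate; try tauto.
  all: unfold bin_split in H; destruct (splitb q A1) as [[? ?]|] eqn:E1; try discriminate;
  destruct (splitb q A2) as [[? ?]|] eqn:E2; try discriminate.
  all: destruct Hb as [Hb|Hb]; [left; eapply IHA1 | right; eapply IHA2]; eauto.
Qed.


Lemma Pf_subst A t : Pf [] A -> Pf [] (subst t A).
Proof. intro H; apply Pthm, L_subst, Pf_L, H. Qed.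

Lemma single : forall n A p, tb A < n -> ~ occurs_unboxed p A ->
  exists D, Pf [] (Iff (subst (upd p D) A) D) /\ (forall b, occurs b D -> occurs b A /\ b <> p).
Proof.
  induction n; intros A p Hn Hp; [lia|].
  set (q := fresh A p).
  assert (Hq1 : ~ occurs q A) by apply fresh_nocc.
  assert (Hq2 : q <> p) by apply fresh_neq.
  destruct (splitb q A) as [[B C]|] eqn:Hs.
  2:{ exists A. split.
      - rewrite (subst_upd_nocc A p A); [apply iff_refl|].
        intro H; apply Hp; eapply split_none; eauto.
      - intros b Hb; split; auto. intro; subst; apply Hp; eapply split_none; eauto. }
  destruct (split_prop _ _ _ _ Hs) as [S1 [S2 [S3 [S4 S5]]]].
  specialize (S1 Hq1).
  assert (HqC : ~ occurs q C) by (intro H; apply Hq1, S4, H).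
  destruct (IHn B p ltac:(lia)) as [D [HD1 HD2]].
  { intro H; destruct (S5 _ H); auto. }
  set (qs := Box (subst (upd p (subst (upd q Top) D)) C)).
  set (ps := subst (upd q qs) D).
  exists ps. split.
  -
    assert (H1 : Pf [] (Iff (Box (subst (upd p ps) C)) qs)).
    { pose proof (fix_box (subst (upd p D) C) q) as HF.
      assert (E1 : subst (upd q Top) (subst (upd p D) C) = subst (upd p (subst (upd q Top) D)) C).
      { rewrite subst_comp; apply subst_ext; intros b Hb.
        unfold upd at 2 3; destruct (atom_eq_dec b p); auto.
        simpl; apply upd_neq; intro E; apply HqC; rewrite <- E; exact Hb. }
      rewrite E1 in HF. fold qs in HF.
      assert (E2 : subst (upd q qs) (subst (upd p D) C) = subst (upd p ps) C).
      { rewrite subst_comp; apply subst_ext; intros b Hb.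
        unfold upd at 2 3; destruct (atom_eq_dec b p); auto.
        simpl; apply upd_neq; intro E; apply HqC; rewrite <- E; exact Hb. }
      rewrite E2 in HF. exact HF. }
    pose proof (Pf_subst _ (upd q qs) HD1) as H2. simpl in H2. fold ps in H2.
    rewrite <- S1. eapply iff_trans; [| exact H2].
    rewrite !subst_comp. apply Repl. intro b.
    destruct (atom_eq_dec b q) as [->|Hbq].
    + rewrite upd_eq, upd_neq by auto. simpl. rewrite upd_eq. exact H1.
    + rewrite (upd_neq q (Box C) b Hbq). simpl.
      destruct (atom_eq_dec b p) as [->|Hbp].
      * rewrite !upd_eq. apply iff_refl.
      * rewrite !upd_neq by auto. simpl. rewrite upd_neq by auto. apply iff_refl.
  - intros b Hb. unfold ps in Hb.
    destruct (occurs_subst _ _ _ Hb) as [c [Hc1 Hc2]].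
    destruct (HD2 c Hc1) as [HcB Hcp].
    destruct (occ_upd _ _ _ _ Hc2) as [[-> Hb2] | [Hcq ->]].
    + unfold qs in Hb2; simpl in Hb2.
      destruct (occurs_subst _ _ _ Hb2) as [c' [Hc'1 Hc'2]].
      destruct (occ_upd _ _ _ _ Hc'2) as [[-> Hb3] | [Hcp' ->]].
      * destruct (occurs_subst _ _ _ Hb3) as [c'' [Hc''1 Hc''2]].
        destruct (occ_upd _ _ _ _ Hc''2) as [[-> Hb4] | [Hcq'' ->]].
        -- simpl in Hb4; destruct Hb4 as [[]|[]].
        -- destruct (HD2 _ Hc''1) as [HB Hne]. split; auto.
           destruct (S3 _ HB); [auto | congruence].
      * split; auto.
    + split; auto. destruct (S3 _ HcB); [auto | congruence].
Qed.


Theorem mainTheorem15 (m : nat) (E : nat -> form) (a : nat -> atom)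
  (Hdistinct : forall i j, i < m -> j < m -> a i = a j -> i = j)
  (Hboxed : forall i j, i < m -> j < m -> ~ occurs_unboxed (a i) (E j)) :
  exists tau : atom -> form,
    (forall i, i < m -> iGL (Iff (subst tau (E i)) (tau (a i)))) /\
    (forall b, (forall i, i < m -> b <> a i) -> tau b = Atm b) /\
    (forall i b, i < m -> occurs b (tau (a i)) ->
       (exists j, j < m /\ occurs b (E j)) /\ (forall k, k < m -> b <> a k)).
Proof.
  revert E a Hdistinct Hboxed. induction m as [|m IH]; intros E a Hdistinct Hboxed.
  { exists Atm. split; [intros; lia|]. split; [auto|]. intros; lia. }
  set (p := a m).
  destruct (single (S (tb (E m))) (E m) p ltac:(lia) (Hboxed m m ltac:(lia) ltac:(lia)))
    as [D [HD1 HD2]].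
  set (E' := fun j => subst (upd p D) (E j)).
  destruct (IH E' a) as [t [T1 [T2 T3]]].
  { intros; apply Hdistinct; auto. }
  { intros i j Hi Hj H. unfold E' in H.
    destruct (unb_subst _ _ _ H) as [c [Hc1 Hc2]].
    destruct (unb_upd _ _ _ _ Hc2) as [E0|[_ E0]].
    - apply (Hboxed m j); auto. rewrite E0 in Hc1; exact Hc1.
    - apply (Hboxed i j); auto. rewrite E0; exact Hc1. }
  set (tau := fun b => if atom_eq_dec b p then subst t D else t b).
  assert (Hc : forall j, subst tau (E j) = subst t (E' j)).
  { intro j; unfold E'; rewrite subst_comp; apply subst_ext; intros b _.
    unfold tau, upd; destruct (atom_eq_dec b p); auto. }
  assert (Hp : t p = Atm p).
  { apply T2; intros i Hi E0. symmetry in E0. apply (Hdistinct i m) in E0; lia. }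
  assert (HX : forall j b, j < m -> occurs b (E' j) ->
             (exists j', j' < S m /\ occurs b (E j')) /\ b <> p).
  { intros j b Hj Hb. unfold E' in Hb.
    destruct (occurs_subst _ _ _ Hb) as [c [Hc1 Hc2]].
    destruct (occ_upd _ _ _ _ Hc2) as [[-> Hb2]|[Hcp ->]].
    - destruct (HD2 _ Hb2). split; auto. exists m; split; auto.
    - split; auto. exists j; split; auto. }
  assert (Hta : forall i, i < m -> tau (a i) = t (a i)).
  { intros i Hi; unfold tau; destruct (atom_eq_dec (a i) p); auto.
    apply (Hdistinct i m) in e; lia. }
  assert (Htp : tau p = subst t D).
  { unfold tau; destruct (atom_eq_dec p p); congruence. }
  exists tau. split; [|split].
  - intros i Hi. rewrite Hc.
    destruct (Nat.eq_dec i m) as [->|Hne].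
    + fold p. rewrite Htp. apply L_iGL.
      pose proof (L_subst _ t (Pf_L _ HD1)) as H. simpl in H. exact H.
    + rewrite Hta by lia. apply T1; lia.
  - intros b Hb. unfold tau; destruct (atom_eq_dec b p) as [E0|].
    + exfalso; apply (Hb m); auto.
    + apply T2; intros; apply Hb; lia.
  - intros i b Hi Hb.
    assert (FromT : forall k, k < m -> occurs b (t (a k)) ->
      (exists j, j < S m /\ occurs b (E j)) /\ (forall k, k < S m -> b <> a k)).
    { intros k Hk Hb'. destruct (T3 k b Hk Hb') as [[j [Hj Hbj]] Hne].
      destruct (HX j b Hj Hbj) as [Hj' Hbp]. split; auto.
      intros k' Hk'. destruct (Nat.eq_dec k' m) as [->|]; auto. apply Hne; lia. }
    destruct (Nat.eq_dec i m) as [->|Hne].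
    + fold p in Hb. rewrite Htp in Hb.
      destruct (occurs_subst _ _ _ Hb) as [c [Hc1 Hc2]].
      destruct (HD2 c Hc1) as [HcE Hcp].
      destruct (classic (exists k, k < m /\ c = a k)) as [[k [Hk ->]]|Hno].
      * apply (FromT k Hk Hc2).
      * rewrite T2 in Hc2.
        2:{ intros i' Hi' E0. apply Hno; eauto. }
        simpl in Hc2. subst c. split.
        -- exists m; split; auto.
        -- intros k Hk E0. destruct (Nat.eq_dec k m) as [->|]; auto.
           apply Hno; exists k; split; auto; lia.
    + rewrite Hta in Hb by lia. apply (FromT i); [lia | exact Hb].
Qed.
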